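(* Let $s=0$ and $\lambda\in\mathbb{C}$. The space of even superderivations of $\mathfrak{L}^0_\lambda$ of degree $0$ equals $$\mathrm{span}_{\mathbb{C}}\{\mathrm{ad}\,L_0,\ \mathrm{ad}\,I_0\}\oplus\mathbb{C}\,\partial_G\oplus\delta_{\lambda,0}\,\mathbb{C}\,\partial_D,$$ where the last summand is $\mathbb{C}\partial_D$ if $\lambda=0$ and $\{0\}$ if $\lambda\neq0$. In particular $\partial_G$ is a superderivation for every $\lambda$, and $\partial_D$ is a superderivation when $\lambda=0$.
   Context: For $s\in\{0,\tfrac12\}$ and $\lambda\in\mathbb{C}$, $\mathfrak{L}^s_\lambda$ is the complex Lie superalgebra with basis $\{L_m,I_m,G_p,H_p : m\in\mathbb{Z},\ p\in s+\mathbb{Z}\}$, even part spanned by the $L_m,I_m$, odd part spanned by the $G_p,H_p$, and brackets $[L_m,L_n]=(m-n)L_{m+n}$, $[L_m,I_n]=(m-n)I_{m+n}$, $[L_m,H_p]=(\tfrac m2-p)H_{m+p}$, $[L_m,G_p]=(\tfrac m2-p)G_{m+p}+\lambda(m+1)H_{m+p}$, $[I_m,G_p]=(m-2p)H_{m+p}$, $[G_p,G_q]=I_{p+q}$, plus those given by super-antisymmetry $[y,x]=-(-1)^{|x||y|}[x,y]$; all other brackets of basis elements are zero. $\mathfrak{L}_r$ is spanned by basis elements of index $r$. A superderivation of parity $a$ is a linear map $D$ shifting parity by $a$ with $D([x,y])=[D(x),y]+(-1)^{a|x|}[x,D(y)]$; it has degree $r$ if $D(\mathfrak{L}_q)\subset\mathfrak{L}_{q+r}$.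 $\mathrm{ad}\,x(y)=[x,y]$. The linear maps $\partial_G,\partial_D$ are defined by $\partial_G(L_m)=\partial_G(I_m)=\partial_G(H_p)=0$, $\partial_G(G_p)=H_p$; $\partial_D(L_m)=0$, $\partial_D(I_m)=2I_m$, $\partial_D(G_p)=G_p$, $\partial_D(H_p)=3H_p$. *)

(* Defs.v *)
(* The Lie superalgebra L^0_lambda over a field C modelling
   the complex numbers (any numClosedFieldType, e.g. algC). *)
From HB Require Import structures.
From mathcomp Require Import all_boot all_order all_algebra.
Set Implicit Arguments. Unset Strict Implicit. Unset Printing Implicit Defensive.
Import Order.TTheory GRing.Theory Num.Theory.
Local Open Scope ring_scope.

(* Since s = 0, all indices are
   integers.  An element of the algebra is a finite linear combination of the
   basis vectors X_m (X in {L,I,G,H}, m : int); we store, for each kind k, the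
   coefficients (X_m)_m as the coefficients of a polynomial, where the integer
   index m is encoded as the natural number enc m (a bijection int <-> nat). *)
Definition kL : 'I_4 := @Ordinal 4 0 isT.
Definition kI : 'I_4 := @Ordinal 4 1 isT.
Definition kG : 'I_4 := @Ordinal 4 2 isT.
Definition kH : 'I_4 := @Ordinal 4 3 isT.

Definition enc (m : int) : nat :=
  match m with Posz n => n.*2 | Negz n => n.*2.+1 end.
Definition dec (i : nat) : int := if odd i then Negz i./2 else Posz i./2.

Definition SA (C : numClosedFieldType) := {ffun 'I_4 -> {poly C}}.

Section Alg.
Variable C : numClosedFieldType.
Variable lam : C.

Definition coefV (v : SA C) (k : 'I_4) (m : int) : C := (v k)`_(enc m).

Definition bas (k : 'I_4) (m : int) : SA C :=
  [ffun k' => if k' == k then 'X^(enc m) else 0].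

Definition half (m : int) : C := m%:~R / 2%:R.

Definition brb (k : 'I_4) (m : int) (k' : 'I_4) (n : int) : SA C :=
  match nat_of_ord k, nat_of_ord k' with
  | 0, 0 => (m - n)%:~R *: bas kL (m + n)%R
  | 0, 1 => (m - n)%:~R *: bas kI (m + n)%R
  | 1, 0 => - ((n - m)%:~R *: bas kI (n + m)%R)
  | 0, 3 => (half m - n%:~R) *: bas kH (m + n)%R
  | 3, 0 => - ((half n - m%:~R) *: bas kH (n + m)%R)
  | 0, 2 => (half m - n%:~R) *: bas kG (m + n)%R
            + (lam * (m + 1)%:~R) *: bas kH (m + n)%R
  | 2, 0 => - ((half n - m%:~R) *: bas kG (n + m)%R
            + (lam * (n + 1)%:~R) *: bas kH (n + m)%R)
  | 1, 2 => (m - 2 * n)%:~R *: bas kH (m + n)%R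
  | 2, 1 => - ((n - 2 * m)%:~R *: bas kH (n + m)%R)
  | 2, 2 => bas kI (m + n)%R
  | _, _ => 0
  end.

Definition bracket (x y : SA C) : SA C :=
  \sum_(k < 4) \sum_(i < size (x k)) \sum_(k' < 4) \sum_(j < size (y k'))
     ((x k)`_i * (y k')`_j) *: brb k (dec i) k' (dec j).

Definition ad (x : SA C) : SA C -> SA C := fun y => bracket x y.

Definition is_even (v : SA C) : Prop := v kG = 0 /\ v kH = 0.
Definition is_odd (v : SA C) : Prop := v kL = 0 /\ v kI = 0.

Definition in_deg (q : int) (v : SA C) : Prop :=
  forall (k : 'I_4) (i : nat), i <> enc q -> (v k)`_i = 0.

Definition is_linear (D : SA C -> SA C) : Prop :=
  forall (a : C) (x y : SA C), D (a *: x + y) = a *: D x + D y.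

(* superderivation of parity a (a = false: even, a = true: odd) *)
Definition superder (a : bool) (D : SA C -> SA C) : Prop :=
  [/\ is_linear D,
      (forall x, is_even x -> if a then is_odd (D x) else is_even (D x)),
      (forall x, is_odd x -> if a then is_even (D x) else is_odd (D x)) &
      forall x y,
        (is_even x ->
           D (bracket x y) = bracket (D x) y + bracket x (D y)) /\
        (is_odd x ->
           D (bracket x y) = bracket (D x) y + (-1) ^+ a *: bracket x (D y))].

Definition has_degree (r : int) (D : SA C -> SA C) : Prop :=
  forall q x, in_deg q x -> in_deg (q + r) (D x).

Definition partG (v : SA C) : SA C :=
  [ffun k => if k == kH then v kG else 0].

(* partial_D : L_m |-> 0, I_m |-> 2 I_m, G_p |-> G_p, H_p |-> 3 H_p *)
Definition partD (v : SA C) : SA C :=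
  [ffun k : 'I_4 => (nth 0%N [:: 0; 2; 1; 3]%N k)%:R *: v k].

End Alg.

(* Main.v *)
Require Import Defs.
From HB Require Import structures.
From mathcomp Require Import all_boot all_order all_algebra.
From mathcomp Require Import ring lra zify.
Import GRing.Theory Num.Theory.
Local Open Scope ring_scope.
Set Implicit Arguments. Unset Strict Implicit.

Lemma decK : cancel enc dec.
Proof.
case=> n; rewrite /dec /=; first by rewrite odd_double doubleK.
by rewrite odd_double /= uphalf_double.
Qed.

Lemma encK : cancel dec enc.
Proof.
move=> i; rewrite /dec; have := odd_double_half i.
by case: (odd i) => /= h; rewrite -[RHS]h ?add1n ?add0n -?muln2 // -!mul2n. 
Qed.

Lemma enc_inj : injective enc.
Proof. exact: can_inj decK. Qed.

Section Infra.
Variable C : numClosedFieldType.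
Variable lam : C.
Local Notation SA := (SA C).
Local Notation bas := (bas C).
Local Notation bracket := (bracket lam).
Local Notation brb := (brb lam).

Lemma bas_coef k q k' i : ((bas k q) k')`_i = ((k' == k) && (i == enc q))%:R.
Proof. by rewrite ffunE; case: eqP => _ /=; rewrite ?coefXn ?coef0. Qed.

Lemma SAeq (u w : SA) : (forall k i, (u k)`_i = (w k)`_i) -> u = w.
Proof. by move=> h; apply/ffunP => k; apply/polyP => i; apply: h. Qed.

Lemma SAE (u w : SA) a k : (a *: u + w) k = a *: u k + w k.
Proof. by rewrite !ffunE. Qed.
Lemma SAD (u w : SA) k : (u + w) k = u k + w k.
Proof. by rewrite !ffunE. Qed.
Lemma SAZ (u : SA) a k : (a *: u) k = a *: u k.
Proof. by rewrite !ffunE. Qed.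
Lemma SAN (u : SA) k : (- u) k = - u k.
Proof. by rewrite !ffunE. Qed.
Lemma SA0 k : (0 : SA) k = 0.
Proof. by rewrite !ffunE. Qed.

Lemma sum4 (F : 'I_4 -> SA) : \sum_(k < 4) F k = F kL + F kI + F kG + F kH.
Proof.
rewrite !big_ord_recr big_ord0 /=.
congr (_ + _ + _ + _); rewrite ?add0r; congr F; exact: val_inj.
Qed.

Lemma I4P (k : 'I_4) : [\/ k = kL, k = kI, k = kG | k = kH].
Proof.
case: k => [[|[|[|[|n]]]] h].
- by constructor 1; apply: val_inj.
- by constructor 2; apply: val_inj.
- by constructor 3; apply: val_inj.
- by constructor 4; apply: val_inj.
- by [].
Qed.

Lemma sum_delta n (a : nat -> C) (j : nat) :
  \sum_(i < n) a i * (j == i :> nat)%:R = (j < n)%:R * a j.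
Proof.
case: (ltnP j n) => hj.
  rewrite (bigD1 (Ordinal hj)) //= mul1r big1.
    by rewrite addr0 /= eqxx mulr1.
  move=> i hi.
  case: eqP => [hji|]; last by rewrite mulr0.
  by move: hi; rewrite -val_eqE /= hji eqxx.
rewrite mul0r big1 // => i _; case: eqP => [hji|]; last by rewrite mulr0.
by move: (ltn_ord i) hj; rewrite -hji; case: ltngtP.
Qed.

Lemma coef_sumbas n (a : nat -> C) k k' (j : nat) :
  ((\sum_(i < n) a i *: bas k (dec i)) k')`_j
    = (k' == k)%:R * ((j < n)%:R * a j).
Proof.
rewrite sum_ffunE coef_sum -sum_delta mulr_sumr; apply: eq_bigr => i _.
rewrite SAZ coefZ bas_coef encK.
by case: (k' == k); rewrite /= ?mul0r ?mulr0 ?mul1r.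
Qed.

Lemma expand (v : SA) :
  v = \sum_(k < 4) \sum_(i < size (v k)) (v k)`_i *: bas k (dec i).
Proof.
apply: SAeq => k' j; rewrite sum_ffunE coef_sum (bigD1 k') //= [X in _ + X]big1 => [|k nk].
  rewrite addr0 coef_sumbas eqxx mul1r.
  by case: ltnP => h; rewrite /= ?mul1r // mul0r nth_default.
by rewrite coef_sumbas eq_sym (negbTE nk) mul0r.
Qed.


Definition Phi (T : 'I_4 -> nat -> SA) (x : SA) :=
  \sum_(k < 4) \sum_(i < size (x k)) (x k)`_i *: T k i.

Lemma Phi_widen (T : 'I_4 -> nat -> SA) (x : SA) N : (forall k, size (x k) <= N)%N ->
  Phi T x = \sum_(k < 4) \sum_(i < N) (x k)`_i *: T k i.
Proof.
move=> hN; apply: eq_bigr => k _.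
rewrite (big_ord_widen _ (fun i => (x k)`_i *: T k i) (hN k)) big_mkcond /=.
apply: eq_bigr => i _; case: ltnP => // h.
by rewrite nth_default // scale0r.
Qed.

Definition sz (x : SA) := (size (x kL) + size (x kI) + size (x kG) + size (x kH))%N.

Lemma sz_le (x : SA) k : (size (x k) <= sz x)%N.
Proof. rewrite /sz; case: (I4P k) => ->; lia. Qed.

Lemma size_comb (a : C) (x y : SA) k : (size ((a *: x + y)%R k) <= sz x + sz y)%N.
Proof.
rewrite SAE; apply: leq_trans (size_polyD _ _) _.
rewrite geq_max; apply/andP; split.
  by apply: leq_trans (size_scale_leq _ _) _; apply: leq_trans (sz_le x k) _; apply: leq_addr.
by apply: leq_trans (sz_le y k) _; apply: leq_addl.
Qed.

Lemma Phi_lin (T : 'I_4 -> nat -> SA) : is_linear (Phi T).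
Proof.
move=> a x y; set N := (sz x + sz y)%N.
rewrite (@Phi_widen T (a *: x + y) N) ?(@Phi_widen T x N) ?(@Phi_widen T y N).
- rewrite scaler_sumr -big_split; apply: eq_bigr => k _.
  rewrite scaler_sumr -big_split; apply: eq_bigr => i _.
  by rewrite SAE coefD coefZ scalerDl scalerA.
- by move=> k; apply: leq_trans (sz_le y k) _; apply: leq_addl.
- by move=> k; apply: leq_trans (sz_le x k) _; apply: leq_addr.
- by move=> k; apply: size_comb.
Qed.

Lemma Phi_combT (T1 T2 : 'I_4 -> nat -> SA) (a : C) x :
  Phi (fun k i => a *: T1 k i + T2 k i) x = a *: Phi T1 x + Phi T2 x.
Proof.
rewrite /Phi scaler_sumr -big_split; apply: eq_bigr => k _.
rewrite scaler_sumr -big_split; apply: eq_bigr => i _.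
by rewrite scalerDr !scalerA mulrC.
Qed.

Lemma sum_deltaV n (A : nat -> SA) (j : nat) :
  \sum_(i < n) (i == j :> nat)%:R *: A i = (j < n)%:R *: A j.
Proof.
case: (ltnP j n) => hj.
  rewrite (bigD1 (Ordinal hj)) //= big1.
    by rewrite addr0 /= eqxx !scale1r.
  move=> i hi.
  case: eqP => [hji|]; last by rewrite scale0r.
  by move: hi; rewrite -val_eqE /= hji eqxx.
rewrite scale0r big1 // => i _; case: eqP => [hji|]; last by rewrite scale0r.
by move: (ltn_ord i) hj; rewrite hji; case: ltngtP.
Qed.

Lemma Phi_eq (T1 T2 : 'I_4 -> nat -> SA) (x : SA) : (forall k i, T1 k i = T2 k i) -> Phi T1 x = Phi T2 x.
Proof. by move=> h; apply: eq_bigr => k _; apply: eq_bigr => i _; rewrite h. Qed.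

Lemma Phi_bas (T : 'I_4 -> nat -> SA) k m : Phi T (bas k m) = T k (enc m).
Proof.
rewrite (@Phi_widen T _ (enc m).+1); last first.
  by move=> k'; rewrite ffunE; case: eqP; rewrite ?size_polyXn ?size_poly0.
rewrite (bigD1 k) //= [X in _ + X]big1 => [|k' nk].
  under eq_bigr do rewrite bas_coef eqxx /=.
  by rewrite sum_deltaV ltnSn scale1r addr0.
by rewrite big1 // => i _; rewrite bas_coef (negbTE nk) scale0r.
Qed.

Lemma bracketE (x y : SA) :
  bracket x y = Phi (fun k i => Phi (fun k' j => brb k (dec i) k' (dec j)) y) x.
Proof.
rewrite /bracket /Phi; apply: eq_bigr => k _; apply: eq_bigr => i _.
rewrite scaler_sumr; apply: eq_bigr => k' _.
rewrite scaler_sumr; apply: eq_bigr => j _.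
by rewrite scalerA.
Qed.

Lemma bracket_bas k m k' n : bracket (bas k m) (bas k' n) = brb k m k' n.
Proof. by rewrite bracketE !Phi_bas !decK. Qed.

Lemma bracket_linl (y : SA) : is_linear (fun x => bracket x y).
Proof. by move=> a x x'; rewrite !bracketE Phi_lin. Qed.

Lemma bracket_linr (x : SA) : is_linear (bracket x).
Proof.
move=> a y y'; rewrite !bracketE -Phi_combT.
by apply: Phi_eq => k i; rewrite Phi_lin.
Qed.


Section Lin.
Variable F : SA -> SA.
Hypothesis hF : is_linear F.

Lemma lin0 : F 0 = 0.
Proof.
have := hF 1 0 0; rewrite scale1r addr0 scale1r => h.
by apply: (addrI (F 0)); rewrite addr0 -h.
Qed.
Lemma linD u w : F (u + w) = F u + F w.
Proof. by have := hF 1 u w; rewrite !scale1r. Qed.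
Lemma linZ a u : F (a *: u) = a *: F u.
Proof. by have := hF a u 0; rewrite !addr0 lin0 addr0. Qed.
Lemma linN u : F (- u) = - F u.
Proof. by rewrite -scaleN1r linZ scaleN1r. Qed.
Lemma lin_sum I r (P : pred I) (G : I -> SA) :
  F (\sum_(i <- r | P i) G i) = \sum_(i <- r | P i) F (G i).
Proof. by elim/big_rec2: _ => [|i y1 y2 _ <-]; rewrite ?lin0 ?linD. Qed.

Lemma lin_expand (v : SA) :
  F v = \sum_(k < 4) \sum_(i < size (v k)) (v k)`_i *: F (bas k (dec i)).
Proof.
rewrite {1}(expand v) lin_sum; apply: eq_bigr => k _.
by rewrite lin_sum; apply: eq_bigr => i _; rewrite linZ.
Qed.

Lemma lin_closed (P : SA -> Prop) : P 0 ->
  (forall a u w, P u -> P w -> P (a *: u + w)) ->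
  forall v : SA, (forall k i, (v k)`_i != 0 -> P (F (bas k (dec i)))) -> P (F v).
Proof.
move=> P0 PC v hv; rewrite lin_expand.
have PD u w : P u -> P w -> P (u + w) by move=> pu pw; rewrite -[u]scale1r; apply: PC.
apply: (big_ind P) => // k _; apply: (big_ind P) => // i _.
have [->|nz] := eqVneq (v k)`_i 0; first by rewrite scale0r.
by rewrite -[_ *: _]addr0; apply: PC => //; apply: hv.
Qed.
End Lin.

Lemma lin_ext (F G : SA -> SA) : is_linear F -> is_linear G ->
  (forall k m, F (bas k m) = G (bas k m)) -> forall v : SA, F v = G v.
Proof.
move=> hF hG h v; rewrite (lin_expand hF) (lin_expand hG).
by apply: eq_bigr => k _; apply: eq_bigr => i _; rewrite h.
Qed.

Lemma lin_comb (F G : SA -> SA) a : is_linear F -> is_linear G ->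
  is_linear (fun v => a *: F v + G v).
Proof.
move=> hF hG b x y; rewrite (linD hF) (linZ hF) (linD hG) (linZ hG).
rewrite !scalerDr !scalerA (mulrC a b) -!addrA; congr (_ + _).
by rewrite addrCA.
Qed.

Lemma lin_zero : is_linear (fun _ : SA => 0).
Proof. by move=> a x y; rewrite scaler0 addr0. Qed.

Lemma bracketDl x x' y : bracket (x + x') y = bracket x y + bracket x' y.
Proof. exact: (linD (bracket_linl y)). Qed.
Lemma bracketZl a x y : bracket (a *: x) y = a *: bracket x y.
Proof. exact: (linZ (bracket_linl y)). Qed.
Lemma bracketNl x y : bracket (- x) y = - bracket x y.
Proof. exact: (linN (bracket_linl y)). Qed.
Lemma bracket0l y : bracket 0 y = 0.
Proof. exact: (lin0 (bracket_linl y)). Qed.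
Lemma bracketDr x y y' : bracket x (y + y') = bracket x y + bracket x y'.
Proof. exact: (linD (bracket_linr x)). Qed.
Lemma bracketZr a x y : bracket x (a *: y) = a *: bracket x y.
Proof. exact: (linZ (bracket_linr x)). Qed.
Lemma bracketNr x y : bracket x (- y) = - bracket x y.
Proof. exact: (linN (bracket_linr x)). Qed.
Lemma bracket0r x : bracket x 0 = 0.
Proof. exact: (lin0 (bracket_linr x)). Qed.

End Infra.

Section Gen.
Variable C : numClosedFieldType.
Variable lam : C.
Local Notation SA := (SA C).
Local Notation bas := (bas C).
Local Notation bracket := (bracket lam).
Local Notation brb := (brb lam).
Local Notation half := (Defs.half C).
Local Notation partG := (@partG C).
Local Notation partD := (@partD C).

Lemma brbLL m n : brb kL m kL n = (m - n)%:~R *: bas kL (m + n). Proof. by []. Qed.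
Lemma brbLI m n : brb kL m kI n = (m - n)%:~R *: bas kI (m + n). Proof. by []. Qed.
Lemma brbLG m n : brb kL m kG n = (half m - n%:~R) *: bas kG (m + n) + (lam * (m + 1)%:~R) *: bas kH (m + n). Proof. by []. Qed.
Lemma brbLH m n : brb kL m kH n = (half m - n%:~R) *: bas kH (m + n). Proof. by []. Qed.
Lemma brbIL m n : brb kI m kL n = - ((n - m)%:~R *: bas kI (n + m)). Proof. by []. Qed.
Lemma brbII m n : brb kI m kI n = 0. Proof. by []. Qed.
Lemma brbIG m n : brb kI m kG n = (m - 2 * n)%:~R *: bas kH (m + n). Proof. by []. Qed.
Lemma brbIH m n : brb kI m kH n = 0. Proof. by []. Qed.
Lemma brbGL m n : brb kG m kL n = - ((half n - m%:~R) *: bas kG (n + m) + (lam * (n + 1)%:~R) *: bas kH (n + m)). Proof. by []. Qed.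
Lemma brbGI m n : brb kG m kI n = - ((n - 2 * m)%:~R *: bas kH (n + m)). Proof. by []. Qed.
Lemma brbGG m n : brb kG m kG n = bas kI (m + n). Proof. by []. Qed.
Lemma brbGH m n : brb kG m kH n = 0. Proof. by []. Qed.
Lemma brbHL m n : brb kH m kL n = - ((half n - m%:~R) *: bas kH (n + m)). Proof. by []. Qed.
Lemma brbHI m n : brb kH m kI n = 0. Proof. by []. Qed.
Lemma brbHG m n : brb kH m kG n = 0. Proof. by []. Qed.
Lemma brbHH m n : brb kH m kH n = 0. Proof. by []. Qed.

Definition brbE := (brbLL, brbLI, brbLG, brbLH, brbIL, brbII, brbIG, brbIH,
  brbGL, brbGI, brbGG, brbGH, brbHL, brbHI, brbHG, brbHH).

Lemma partG_lin : is_linear partG.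
Proof. by move=> a x y; apply/ffunP => k; rewrite !ffunE; case: eqP; rewrite ?scaler0 ?addr0. Qed.
Lemma partD_lin : is_linear partD.
Proof. by move=> a x y; apply/ffunP => k; rewrite !ffunE scalerDr !scalerA mulrC. Qed.

Lemma pGL q : partG (bas kL q) = 0. Proof. by apply/ffunP => k; rewrite !ffunE; case: eqP. Qed.
Lemma pGI q : partG (bas kI q) = 0. Proof. by apply/ffunP => k; rewrite !ffunE; case: eqP. Qed.
Lemma pGG q : partG (bas kG q) = bas kH q. Proof. by apply/ffunP => k; rewrite !ffunE; case: eqP. Qed.
Lemma pGH q : partG (bas kH q) = 0. Proof. by apply/ffunP => k; rewrite !ffunE; case: eqP. Qed.
Lemma pDL q : partD (bas kL q) = 0. 
Proof. by apply/ffunP => k; rewrite !ffunE; case: eqP => [->|]; rewrite ?scaler0 ?scale0r. Qed.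
Lemma pDI q : partD (bas kI q) = 2%:R *: bas kI q.
Proof. by apply/ffunP => k; rewrite !ffunE; case: eqP => [->|]; rewrite ?scaler0. Qed.
Lemma pDG q : partD (bas kG q) = bas kG q.
Proof. by apply/ffunP => k; rewrite !ffunE; case: eqP => [->|]; rewrite ?scaler0 ?scale1r. Qed.
Lemma pDH q : partD (bas kH q) = 3%:R *: bas kH q.
Proof. by apply/ffunP => k; rewrite !ffunE; case: eqP => [->|]; rewrite ?scaler0. Qed.

Definition partE := (pGL, pGI, pGG, pGH, pDL, pDI, pDG, pDH).

Lemma two_neq0 : (2%:R : C) != 0. Proof. by rewrite pnatr_eq0. Qed.


Lemma pG_D u w : partG (u + w) = partG u + partG w. Proof. exact: (linD partG_lin). Qed.
Lemma pG_Z a u : partG (a *: u) = a *: partG u. Proof. exact: (linZ partG_lin). Qed.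
Lemma pG_N u : partG (- u) = - partG u. Proof. exact: (linN partG_lin). Qed.
Lemma pG_0 : partG (0 : SA) = 0. Proof. exact: (lin0 partG_lin). Qed.
Lemma pD_D u w : partD (u + w) = partD u + partD w. Proof. exact: (linD partD_lin). Qed.
Lemma pD_Z a u : partD (a *: u) = a *: partD u. Proof. exact: (linZ partD_lin). Qed.
Lemma pD_N u : partD (- u) = - partD u. Proof. exact: (linN partD_lin). Qed.
Lemma pD_0 : partD (0 : SA) = 0. Proof. exact: (lin0 partD_lin). Qed.

Lemma all4 (P : 'I_4 -> Prop) : P kL -> P kI -> P kG -> P kH -> forall k, P k.
Proof. by move=> ? ? ? ? k; case: (I4P k) => ->. Qed.

Ltac expandAll :=
  do 5 rewrite ?bracket_bas ?brbE ?partE ?bracketDl ?bracketDr ?bracketZl ?bracketZr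
    ?bracketNl ?bracketNr ?bracket0l ?bracket0r ?pG_D ?pG_Z ?pG_N ?pG_0
    ?pD_D ?pD_Z ?pD_N ?pD_0.

Ltac coefAll :=
  apply: SAeq => ? ?; rewrite ?(SAD, SAZ, SAN, SA0, coefD, coefZ, coefN, coef0, bas_coef) /=.

Ltac finish m n :=
  expandAll; rewrite ?add0r ?addr0 ?(addrC n m); coefAll;
  rewrite /Defs.half; by field.
Ltac derL := apply: all4; apply: all4; let m := fresh "m" in let n := fresh "n" in move=> m n; finish m n.

Lemma der_adL : forall k k' m n,
  bracket (bas kL 0) (bracket (bas k m) (bas k' n)) =
  bracket (bracket (bas kL 0) (bas k m)) (bas k' n) +
  bracket (bas k m) (bracket (bas kL 0) (bas k' n)).
Proof. derL. Qed.

Lemma der_adI : forall k k' m n,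
  bracket (bas kI 0) (bracket (bas k m) (bas k' n)) =
  bracket (bracket (bas kI 0) (bas k m)) (bas k' n) +
  bracket (bas k m) (bracket (bas kI 0) (bas k' n)).
Proof. derL. Qed.

Lemma der_pG : forall k k' m n,
  partG (bracket (bas k m) (bas k' n)) =
  bracket (partG (bas k m)) (bas k' n) + bracket (bas k m) (partG (bas k' n)).
Proof. derL. Qed.

Lemma der_pD : lam = 0 -> forall k k' m n,
  partD (bracket (bas k m) (bas k' n)) =
  bracket (partD (bas k m)) (bas k' n) + bracket (bas k m) (partD (bas k' n)).
Proof.
move=> hl; apply: all4; apply: all4; move=> m n;
  expandAll; rewrite ?add0r ?addr0 ?(addrC n m); coefAll;
  rewrite /Defs.half ?hl; by field.
Qed.

End Gen.

Section Back.
Variable C : numClosedFieldType.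
Variable lam : C.
Local Notation SA := (SA C).
Local Notation bas := (bas C).
Local Notation bracket := (bracket lam).
Local Notation brb := (brb lam).
Local Notation half := (Defs.half C).
Local Notation partG := (@partG C).
Local Notation partD := (@partD C).

Definition Rf a b c d (v : SA) : SA :=
  a *: ad lam (bas kL 0) v + b *: ad lam (bas kI 0) v
  + c *: partG v + (if lam == 0 then d *: partD v else 0).

Lemma lin_add (F G : SA -> SA) : is_linear F -> is_linear G ->
  is_linear (fun v => F v + G v).
Proof.
move=> hF hG a x y; rewrite (linD hF) (linZ hF) (linD hG) (linZ hG) scalerDr.
by rewrite -!addrA; congr (_ + _); rewrite addrCA.
Qed.

Lemma lin_scale (F : SA -> SA) a : is_linear F -> is_linear (fun v => a *: F v).
Proof.
move=> hF b x y; rewrite (linD hF) (linZ hF) scalerDr !scalerA mulrC //.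
Qed.

Lemma lin_compose (F G : SA -> SA) : is_linear F -> is_linear G ->
  is_linear (fun v => F (G v)).
Proof. by move=> hF hG a x y; rewrite hG hF. Qed.

Lemma Rf_lin a b c d : is_linear (Rf a b c d).
Proof.
rewrite /Rf /ad; apply: lin_add; last first.
  by case: (lam == 0); [apply: lin_scale; apply: partD_lin | apply: lin_zero].
apply: lin_add; last by apply: lin_scale; apply: partG_lin.
by apply: lin_add; apply: lin_scale; apply: bracket_linr.
Qed.

Lemma Rf_der a b c d (x y : SA) :
  Rf a b c d (bracket x y) = bracket (Rf a b c d x) y + bracket x (Rf a b c d y).
Proof.
have hR := Rf_lin a b c d.
move: x; apply: (lin_ext (F:=fun x => Rf a b c d (bracket x y))
  (G:=fun x => bracket (Rf a b c d x) y + bracket x (Rf a b c d y))).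
- exact: (lin_compose hR (bracket_linl lam y)).
- apply: lin_add; last exact: bracket_linl.
  exact: (lin_compose (bracket_linl lam y) hR).
move=> k m; move: y; apply: (lin_ext (F:=fun y => Rf a b c d (bracket (bas k m) y))
  (G:=fun y => bracket (Rf a b c d (bas k m)) y + bracket (bas k m) (Rf a b c d y))).
- exact: (lin_compose hR (bracket_linr lam _)).
- apply: lin_add; first exact: bracket_linr.
  exact: (lin_compose (bracket_linr lam _) hR).
move=> k' n; rewrite /Rf /ad der_adL der_adI der_pG.
rewrite ?(bracketDl, bracketDr, bracketZl, bracketZr, bracket0l, bracket0r).
case: eqP => hl; rewrite ?(bracket0l, bracket0r).
  rewrite der_pD //.
  rewrite ?(bracketDl, bracketDr, bracketZl, bracketZr, bracket0l, bracket0r).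
  apply: SAeq => k0 i; rewrite ?(SAD, SAZ, SAN, SA0, coefD, coefZ, coefN, coef0); ring.
apply: SAeq => k0 i; rewrite ?(SAD, SAZ, SAN, SA0, coefD, coefZ, coefN, coef0); ring.
Qed.


Lemma Rf_bas_even a b c d q k : (k = kL \/ k = kI) -> is_even (Rf a b c d (bas k q)).
Proof.
case=> ->; rewrite /Rf /ad !bracket_bas !brbE ?partE;
  split; apply/polyP => j; case: (lam == 0);
  rewrite ?(SAD, SAZ, SAN, SA0, coefD, coefZ, coefN, coef0, bas_coef) /=; ring.
Qed.

Lemma Rf_bas_odd a b c d q k : (k = kG \/ k = kH) -> is_odd (Rf a b c d (bas k q)).
Proof.
case=> ->; rewrite /Rf /ad !bracket_bas !brbE ?partE;
  split; apply/polyP => j; case: (lam == 0);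
  rewrite ?(SAD, SAZ, SAN, SA0, coefD, coefZ, coefN, coef0, bas_coef) /=; ring.
Qed.

Lemma Rf_bas_deg a b c d q k : in_deg q (Rf a b c d (bas k q)).
Proof.
move=> k' j /eqP/negbTE hj.
case: (I4P k) => ->; rewrite /Rf /ad !bracket_bas !brbE ?partE ?add0r ?addr0;
  case: (lam == 0);
  rewrite ?(SAD, SAZ, SAN, SA0, coefD, coefZ, coefN, coef0, bas_coef) ?hj /=;
  rewrite ?andbF /=; ring.
Qed.

Lemma Rf_superder a b c d : superder lam false (Rf a b c d) /\ has_degree 0 (Rf a b c d).
Proof.
have hR := Rf_lin a b c d.
split; last first.
  move=> q x hx; rewrite addr0; apply: (lin_closed hR (P := in_deg q)).
  - by move=> k i _; rewrite SA0 coef0.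
  - by move=> s u w hu hw k i hi; rewrite SAE coefD coefZ hu // hw // mulr0 addr0.
  move=> k i nz; have -> : i = enc q.
    by apply/eqP; apply: contraR nz => /eqP h; rewrite hx.
  by rewrite decK; apply: Rf_bas_deg.
split => //.
- move=> x [hG hH] /=; apply: (lin_closed hR (P := is_even (C:=C))).
  + by split; rewrite SA0.
  + by move=> s u w [uG uH] [wG wH]; split; rewrite SAE ?uG ?uH ?wG ?wH scaler0 addr0.
  move=> k i; case: (I4P k) => ->; rewrite ?hG ?hH ?coef0 ?eqxx // => _.
  + by apply: Rf_bas_even; left.
  + by apply: Rf_bas_even; right.
- move=> x [hL hI] /=; apply: (lin_closed hR (P := is_odd (C:=C))).
  + by split; rewrite SA0.
  + by move=> s u w [uG uH] [wG wH]; split; rewrite SAE ?uG ?uH ?wG ?wH scaler0 addr0.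
  move=> k i; case: (I4P k) => ->; rewrite ?hL ?hI ?coef0 ?eqxx // => _.
  + by apply: Rf_bas_odd; left.
  + by apply: Rf_bas_odd; right.
- move=> x y; split=> _; rewrite ?expr0 ?scale1r; exact: Rf_der.
Qed.

End Back.

Section Ints.
Variable C : numClosedFieldType.

Lemma cancelI (x : int) (u v : C) : x != 0 -> x%:~R * u = x%:~R * v -> u = v.
Proof. by move=> nz; apply: mulfI; rewrite intr_eq0. Qed.

Lemma const_int (phi : int -> C) : (forall n, phi (n + 1) = phi n) -> forall n, phi n = phi 0.
Proof.
move=> h; have hP k : phi (Posz k) = phi 0.
  by elim: k => // k IH; rewrite -addn1 PoszD h.
have hN k : phi (- Posz k) = phi 0.
  elim: k => [|k IH]; first by rewrite oppr0.
  by rewrite -IH -h -addn1 PoszD opprD addrNK.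
by case=> k; [exact: hP | rewrite NegzE; exact: hN].
Qed.

Lemma step_int (g : int -> C) kap : (forall n, g (n + 1) = g n + kap) ->
  forall n, g n = g 0 + n%:~R * kap.
Proof.
move=> h n.
have hc m : g (m + 1) - (m + 1)%:~R * kap = g m - m%:~R * kap.
  by rewrite h intrD; ring.
have /= e := @const_int (fun n => g n - n%:~R * kap) hc n.
by rewrite -[g 0](subrK ((0:int)%:~R * kap)) -e; ring.
Qed.

Lemma use_eq (x y u v k : C) : u = v -> x - y = k * (u - v) -> x = y.
Proof. by move=> -> h; apply/eqP; rewrite -subr_eq0 h subrr mulr0. Qed.

Lemma addf_int (f : int -> C) :
  (forall m n, (m - n)%:~R * f (m + n) = (m - n)%:~R * (f m + f n)) ->
  forall m, f m = m%:~R * f 1.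
Proof.
move=> H.
have h m n : m != n -> f (m + n) = f m + f n.
  by move=> ne; apply: (@cancelI (m - n)); [rewrite subr_eq0 | exact: H].
have f0 : f 0 = 0.
  have := h 1 0 isT; rewrite addr0 => e.
  by apply: (use_eq (k:=-1) e); ring.
have fm1 : f (-1) = - f 1.
  have := h 1 (-1) isT; rewrite subrr f0 => e.
  by apply: (use_eq (k:=-1) e); ring.
have f2 : f 2 = f 1 + f 1.
  have := h 2 (-1) isT; rewrite fm1 (_ : 2 + -1 = 1) // => e.
  by apply: (use_eq (k:=-1) e); ring.
have st n : f (n + 1) = f n + f 1.
  have [->|ne] := eqVneq n 1; first exact: f2.
  exact: h.
move=> m; rewrite (step_int st m) f0 add0r //.
Qed.
End Ints.

Section Fwd.
Variable C : numClosedFieldType.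
Variable lam : C.
Local Notation SA := (SA C).
Local Notation bas := (bas C).
Local Notation bracket := (bracket lam).
Local Notation brb := (brb lam).
Local Notation half := (Defs.half C).
Local Notation partG := (@partG C).
Local Notation partD := (@partD C).

Lemma bas_deg k m : in_deg m (bas k m).
Proof. by move=> k' i /eqP/negbTE hi; rewrite bas_coef hi andbF. Qed.

Lemma deg_expand q (v : SA) : in_deg q v ->
  v = (v kL)`_(enc q) *: bas kL q + (v kI)`_(enc q) *: bas kI q
    + (v kG)`_(enc q) *: bas kG q + (v kH)`_(enc q) *: bas kH q.
Proof.
move=> hv; apply: SAeq => k i.
rewrite ?(SAD, SAZ, SAN, SA0, coefD, coefZ, coefN, coef0, bas_coef).
have [->|ne] := eqVneq i (enc q).
  by case: (I4P k) => -> /=; rewrite ?eqxx /=; ring.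
by rewrite hv ?(negbTE ne) ?andbF /=; [ring | apply/eqP].
Qed.

Lemma bas_even k m : (k = kL \/ k = kI) -> is_even (bas k m).
Proof. by case=> ->; split; apply/polyP => j; rewrite coef0 bas_coef. Qed.
Lemma bas_odd k m : (k = kG \/ k = kH) -> is_odd (bas k m).
Proof. by case=> ->; split; apply/polyP => j; rewrite coef0 bas_coef. Qed.

Variable D : SA -> SA.
Hypothesis hsd : superder lam false D.
Hypothesis hdg : has_degree 0 D.

Lemma hlin : is_linear D. Proof. by case: hsd. Qed.
Lemma DD u w : D (u + w) = D u + D w. Proof. exact: (linD hlin). Qed.
Lemma DZ a u : D (a *: u) = a *: D u. Proof. exact: (linZ hlin). Qed.
Lemma DN u : D (- u) = - D u. Proof. exact: (linN hlin). Qed.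
Lemma D0 : D 0 = 0. Proof. exact: (lin0 hlin). Qed.

Definition dc k m k' := ((D (bas k m)) k')`_(enc m).

Lemma Dbas_deg k m : in_deg m (D (bas k m)).
Proof. by have := hdg (@bas_deg k m); rewrite addr0. Qed.

Lemma EL m : D (bas kL m) = dc kL m kL *: bas kL m + dc kL m kI *: bas kI m.
Proof.
rewrite {1}(deg_expand (@Dbas_deg kL m)).
case: hsd => _ hev _ _; have [-> ->] := hev _ (@bas_even kL m (or_introl erefl)).
by rewrite coef0 !scale0r !addr0.
Qed.
Lemma EI m : D (bas kI m) = dc kI m kL *: bas kL m + dc kI m kI *: bas kI m.
Proof.
rewrite {1}(deg_expand (@Dbas_deg kI m)).
case: hsd => _ hev _ _; have [-> ->] := hev _ (@bas_even kI m (or_intror erefl)).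
by rewrite coef0 !scale0r !addr0.
Qed.
Lemma EG m : D (bas kG m) = dc kG m kG *: bas kG m + dc kG m kH *: bas kH m.
Proof.
rewrite {1}(deg_expand (@Dbas_deg kG m)).
case: hsd => _ _ hod _; have [-> ->] := hod _ (@bas_odd kG m (or_introl erefl)).
by rewrite coef0 !scale0r !add0r.
Qed.
Lemma EH m : D (bas kH m) = dc kH m kG *: bas kG m + dc kH m kH *: bas kH m.
Proof.
rewrite {1}(deg_expand (@Dbas_deg kH m)).
case: hsd => _ _ hod _; have [-> ->] := hod _ (@bas_odd kH m (or_intror erefl)).
by rewrite coef0 !scale0r !add0r.
Qed.

Lemma Dder k m k' n : D (bracket (bas k m) (bas k' n)) =
  bracket (D (bas k m)) (bas k' n) + bracket (bas k m) (D (bas k' n)).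
Proof.
case: hsd => _ _ _ hd.
case: (I4P k) => ->.
- by apply: (hd _ _).1; apply: bas_even; left.
- by apply: (hd _ _).1; apply: bas_even; right.
- by rewrite ((hd _ _).2 (bas_odd _ (or_introl erefl))) expr0 scale1r.
- by rewrite ((hd _ _).2 (bas_odd _ (or_intror erefl))) expr0 scale1r.
Qed.

Ltac rel K1 K2 KK m n :=
  have := Dder K1 m K2 n;
  rewrite bracket_bas brbE ?DD ?DZ ?DN ?D0 ?EL ?EI ?EG ?EH;
  do 4 rewrite ?bracket_bas ?brbE ?bracketDl ?bracketDr ?bracketZl ?bracketZr
    ?bracketNl ?bracketNr ?bracket0l ?bracket0r;
  rewrite ?(addrC n m);
  move/(congr1 (fun v : SA => (v KK)`_(enc (m + n))));
  rewrite ?(SAD, SAZ, SAN, SA0, coefD, coefZ, coefN, coef0, bas_coef) /= ?eqxx /=.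



Ltac fin e := first [ apply: (use_eq (k:=1) e); rewrite /Defs.half; by field
                    | apply: (use_eq (k:=-1) e); rewrite /Defs.half; by field ].

Lemma R1 (m n : int) : (m - n)%:~R * dc kL (m + n) kL = (m - n)%:~R * (dc kL m kL + dc kL n kL).
Proof. rel kL kL kL m n => e; fin e. Qed.
Lemma R2 (m n : int) : (m - n)%:~R * dc kL (m + n) kI = (m - n)%:~R * (dc kL m kI + dc kL n kI).
Proof. rel kL kL kI m n => e; fin e. Qed.
Lemma R3 (m n : int) : (m - n)%:~R * dc kI (m + n) kL = (m - n)%:~R * dc kI n kL.
Proof. rel kL kI kL m n => e; fin e. Qed.
Lemma R4 (m n : int) : (m - n)%:~R * dc kI (m + n) kI = (m - n)%:~R * (dc kL m kL + dc kI n kI).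
Proof. rel kL kI kI m n => e; fin e. Qed.
Lemma R5 (m n : int) : dc kI (m + n) kL = 0.
Proof. rel kG kG kL m n => e; fin e. Qed.
Lemma R6 (m n : int) : dc kI (m + n) kI = dc kG m kG + dc kG n kG.
Proof. rel kG kG kI m n => e; fin e. Qed.
Lemma R7 (m n : int) : (m - 2 * n)%:~R * dc kH (m + n) kG = dc kI m kL * (half m - n%:~R).
Proof. rel kI kG kG m n => e; fin e. Qed.
Lemma R8 (m n : int) : (m - 2 * n)%:~R * dc kH (m + n) kH =
  dc kI m kL * (lam * (m + 1)%:~R) + (dc kI m kI + dc kG n kG) * (m - 2 * n)%:~R.
Proof. rel kI kG kH m n => e; fin e. Qed.
Lemma R9 (m n : int) : (half m - n%:~R) * dc kG (m + n) kH + lam * (m + 1)%:~R * dc kH (m + n) kH =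
  dc kL m kL * (lam * (m + 1)%:~R) + dc kL m kI * (m - 2 * n)%:~R
  + dc kG n kG * (lam * (m + 1)%:~R) + dc kG n kH * (half m - n%:~R).
Proof. rel kL kG kH m n => e; fin e. Qed.


Local Notation a1 := (dc kL 1 kL).
Local Notation b1 := (dc kL 1 kI).
Local Notation e0 := (dc kG 0 kG).
Local Notation z0 := (dc kG 0 kH).

Lemma FA m : dc kL m kL = m%:~R * a1.
Proof. exact: (addf_int (f := fun m => dc kL m kL) R1). Qed.
Lemma FB m : dc kL m kI = m%:~R * b1.
Proof. exact: (addf_int (f := fun m => dc kL m kI) R2). Qed.
Lemma FGm m : dc kI m kL = 0.
Proof. by have := R5 m 0; rewrite addr0. Qed.
Lemma FDl m : dc kI m kI = m%:~R * a1 + 2%:R * e0.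
Proof.
have h0 : dc kI 0 kI = 2%:R * e0.
  by have := R6 0 0; rewrite add0r => ->; ring.
have [->|nz] := eqVneq m 0; first by rewrite h0; ring.
have := R4 m 0; rewrite ?subr0 ?addr0 FA => e.
by rewrite (cancelI nz e) h0.
Qed.
Lemma FE p : dc kG p kG = p%:~R * a1 + e0.
Proof.
have := R6 p 0; rewrite addr0 FDl => e.
by apply: (use_eq (k:=-1) e); ring.
Qed.
Lemma FTh k : dc kH k kH = k%:~R * a1 + 3%:R * e0.
Proof.
have [->|nz] := eqVneq k 0.
  have := R8 2 (-2); rewrite (_ : 2 + -2 = 0) // FGm mul0r add0r (FDl 2) (FE (-2)) => e.
  have nz6 : (2 - 2 * -2 : int) != 0 by [].
  have e' := cancelI nz6 (etrans e (mulrC _ _)).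
  by rewrite e'; ring.
have := R8 k 0; rewrite ?addr0 FGm mul0r add0r (FDl k) => e.
have e' := cancelI nz (etrans e (mulrC _ _)).
by rewrite e'; ring.
Qed.
Lemma FEta k : dc kH k kG = 0.
Proof.
have [->|nz] := eqVneq k 0.
  have := R7 2 (-2); rewrite (_ : 2 + -2 = 0) // FGm mul0r => e.
  have nz6 : (2 - 2 * -2 : int) != 0 by [].
  by apply: (cancelI nz6); rewrite e mulr0.
have := R7 k 0; rewrite ?addr0 FGm mul0r => e.
by apply: (cancelI nz); rewrite e mulr0.
Qed.
Lemma FZ p : dc kG p kH = z0 + p%:~R * (2%:R * b1).
Proof.
move: p; apply: (step_int (g := fun p => dc kG p kH) (kap := 2%:R * b1)) => n /=.
have := R9 (-1) (n + 1); rewrite (_ : -1 + (n + 1) = n); last by ring.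
rewrite (FA (-1)) (FB (-1)) (FE (n + 1)) (FTh n) => e.
have nz : (2 * n + 3 : int) != 0 by lia.
apply: (cancelI nz); apply: (use_eq (k:=2%:R) e); rewrite /Defs.half; by field.
Qed.
Lemma Flam : lam * e0 = 0.
Proof.
have := R9 0 1; rewrite add0r (FA 0) (FB 0) (FE 1) (FTh 1) => e.
by apply: (use_eq (k:=1/2%:R) e); rewrite /Defs.half; field.
Qed.


Lemma D_char (v : SA) : D v = Rf lam (- a1) (- b1) (z0 + a1 * lam) e0 v.
Proof.
move: v; apply: (lin_ext hlin (Rf_lin lam _ _ _ _)) => k m.
have e00 : lam != 0 -> e0 = 0.
  by move=> nz; have /eqP := Flam; rewrite mulf_eq0 (negbTE nz) => /eqP.
case: (I4P k) => ->;
  rewrite ?EL ?EI ?EG ?EH ?(FA m) ?(FB m) ?(FGm m) ?(FDl m) ?(FE m) ?(FZ m) ?(FEta m) ?(FTh m);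
  rewrite /Rf /ad !bracket_bas !brbE ?partE ?add0r ?addr0;
  (case: eqP => hl; last rewrite ?(e00 (introN eqP hl)));
  apply: SAeq => k' i; case: (I4P k') => ->;
  rewrite ?(SAD, SAZ, SAN, SA0, coefD, coefZ, coefN, coef0, bas_coef) /=;
  rewrite /Defs.half; by field.
Qed.
End Fwd.

Lemma direct_sum (C : numClosedFieldType) (lam : C) (a b c d : C) :
  (forall v : SA C,
        a *: ad lam (bas C kL 0) v + b *: ad lam (bas C kI 0) v
        + c *: partG v + (if lam == 0 then d *: partD v else 0) = 0) ->
     [/\ a = 0, b = 0, c = 0 & (lam = 0 -> d = 0)].
Proof.
move=> h.
have h1 := h (bas C kL 1); rewrite /ad !bracket_bas !brbE ?partE in h1.
have ha : a = 0.
  have := congr1 (fun v : SA C => (v kL)`_(enc 1)) h1.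
  case: (lam == 0); rewrite /= ?(SAD, SAZ, SAN, SA0, coefD, coefZ, coefN, coef0, bas_coef) /= => e;
  by apply: (use_eq (k:=-1) e); ring.
have hb : b = 0.
  have := congr1 (fun v : SA C => (v kI)`_(enc 1)) h1.
  case: (lam == 0); rewrite /= ?(SAD, SAZ, SAN, SA0, coefD, coefZ, coefN, coef0, bas_coef) /= => e;
  by apply: (use_eq (k:=-1) e); ring.
have h2 := h (bas C kG 0); rewrite /ad !bracket_bas !brbE ?partE ha hb in h2.
split => //.
  have := congr1 (fun v : SA C => (v kH)`_(enc 0)) h2.
  case: (lam == 0); rewrite /= ?(SAD, SAZ, SAN, SA0, coefD, coefZ, coefN, coef0, bas_coef) /= => e;
  by apply: (use_eq (k:=1) e); ring.
move=> hl; have := congr1 (fun v : SA C => (v kG)`_(enc 0)) h2.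
rewrite hl eqxx /= ?(SAD, SAZ, SAN, SA0, coefD, coefZ, coefN, coef0, bas_coef) /= => e.
by apply: (use_eq (k:=1) e); ring.
Qed.

Unset Implicit Arguments.

Theorem lemma2p3 (C : numClosedFieldType) (lam : C) :
  (* characterization of even superderivations of degree 0 *)
  (forall D : SA C -> SA C,
     (superder lam false D /\ has_degree 0 D) <->
     exists a b c d : C,
       forall v : SA C,
         D v = a *: ad lam (bas C kL 0) v + b *: ad lam (bas C kI 0) v
               + c *: partG v + (if lam == 0 then d *: partD v else 0))
  /\
  (* the sum is direct *)
  (forall a b c d : C,
     (forall v : SA C,
        a *: ad lam (bas C kL 0) v + b *: ad lam (bas C kI 0) v
        + c *: partG v + (if lam == 0 then d *: partD v else 0) = 0) ->
     [/\ a = 0, b = 0, c = 0 & (lam = 0 -> d = 0)]).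
Proof.
split; last exact: direct_sum.
move=> D; split.
  case=> hs hd.
  exists (- dc D kL 1 kL), (- dc D kL 1 kI), (dc D kG 0 kH + dc D kL 1 kL * lam), (dc D kG 0 kG).
  by move=> v; apply: (D_char hs hd).
case=> a [b [c [d hD]]].
have [[h1 h2 h3 h4] h5] := Rf_superder lam a b c d.
have eq : forall v, D v = Rf lam a b c d v by exact: hD.
split; first split.
- by move=> s x y; rewrite !eq; apply: h1.
- by move=> x hx; rewrite eq; apply: h2.
- by move=> x hx; rewrite eq; apply: h3.
- by move=> x y; rewrite !eq; apply: h4.
by move=> q x hx; rewrite eq; apply: h5.
Qed.
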